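(* Let $X$ be an alphabet with $k\ge 1$ letters and let $n\ge 1$. Every word $w\in X^*$ with $|w|>k\cdot(n-1)^k$ (indeed every word with $|w|>\sum_{i=1}^k (n-1)^i$) has a position $j$ with the following property: for every complete ordered DFA $\mathcal{B}$ over $X$ with at most $n$ states and every state $q$ of $\mathcal{B}$, in the run of $\mathcal{B}$ on $w$ starting in $q$, the state reached before reading the $j$-th letter of $w$ equals the state reached after reading it (i.e. the run cycles at position $j$).
   Context: A DFA is ordered if its states can be linearly ordered so that every transition $p\xrightarrow{a}q$ satisfies $p\le q$. Complete means every state has exactly one outgoing transition per letter. *)

(* Defs.v *)
From mathcomp Require Import all_boot.
Set Implicit Arguments. Unset Strict Implicit. Unset Printing Implicit Defensive.

(* A complete DFA over alphabet X with state set Q is given by its total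
   transition function delta : Q -> X -> Q (exactly one outgoing transition
   per state and letter).  Initial/final states play no role here. *)

Definition linear_order (Q : Type) (le : rel Q) : Prop :=
  reflexive le /\ transitive le /\ antisymmetric le /\ total le.

Definition ordered_dfa (Q X : Type) (delta : Q -> X -> Q) : Prop :=
  exists le : rel Q, linear_order le /\ forall p a, le p (delta p a).

Definition run (Q X : Type) (delta : Q -> X -> Q) (q : Q) (u : seq X) : Q :=
  foldl delta q u.

Definition cycling_position (X : finType) (n : nat) (w : seq X) (j : nat) : Prop :=
  j < size w /\
  forall (Q : finType) (delta : Q -> X -> Q),
    #|Q| <= n -> ordered_dfa delta ->
    forall (q : Q) (x0 : X),
      delta (run delta q (take j w)) (nth x0 w j) = run delta q (take j w).

(* Main.v *)
Require Import Defs.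
From mathcomp Require Import all_boot zify.
From Stdlib Require Import Classical.
Set Implicit Arguments. Unset Strict Implicit. Unset Printing Implicit Defensive.

Section Reach.
Variables (X : eqType) (x0 : X).
Fixpoint reach (r : nat) (u : seq X) (j : nat) : Prop :=
  match r with
  | 0 => False
  | r'.+1 => nth x0 u j \notin take j u \/
      exists2 t, t < j & (nth x0 u t \notin take t u) /\ reach r' (drop t.+1 u) (j - t.+1)
  end.
Lemma reach_mono r r' u j : r <= r' -> reach r u j -> reach r' u j.
Proof.
elim: r r' u j => [|r IH] [|r'] u j //= Hr [H|[t Ht [H1 H2]]]; first by left.
by right; exists t => //; split => //; apply: IH H2.
Qed.
Lemma drop_cat_le n (s1 s2 : seq X) : n <= size s1 -> drop n (s1 ++ s2) = drop n s1 ++ s2.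
Proof.
move=> Hn; rewrite drop_cat; case: ltnP => // H.
have -> : n = size s1 by apply/eqP; rewrite eqn_leq Hn H.
by rewrite subnn drop0 drop_size.
Qed.
Lemma reach_prefix r u1 v j : j < size u1 -> reach r (u1 ++ v) j -> reach r u1 j.
Proof.
elim: r u1 j => [|r IH] u1 j //= Hj [H|[t Ht [H1 H2]]].
  by left; rewrite nth_cat Hj takel_cat ?(ltnW Hj) in H.
have Htu : t < size u1 by apply: ltn_trans Ht Hj.
right; exists t => //; split.
  by rewrite nth_cat Htu takel_cat ?(ltnW Htu) in H1.
rewrite drop_cat_le in H2; last by [].
apply: IH H2; rewrite size_drop. 
lia. Qed.

Lemma reach_suffix r v u j : reach r (v ++ u) (size v + j) -> reach r u j.
Proof.
elim: r v u j => [|r IH] v u j //= [H|[t Ht [H1 H2]]].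
  left; rewrite nth_cat ltnNge leq_addr /= addKn take_cat ltnNge leq_addr /= addKn in H.
  by move: H; rewrite mem_cat negb_or => /andP[].
case: (ltnP t (size v)) => Htv.
  rewrite drop_cat_le // in H2.
  have : reach r (drop t.+1 v ++ u) (size (drop t.+1 v) + j).
    by move: H2; congr reach; rewrite size_drop; lia.
  move/IH => Hr; exact: (@reach_mono r r.+1 _ _ (leqnSn r) Hr).
right; exists (t - size v); first by lia.
split.
  move: H1; rewrite nth_cat ltnNge Htv /= take_cat ltnNge Htv /= mem_cat negb_or.
  by case/andP.
move: H2; rewrite drop_cat ltnNge (leq_trans Htv (leqnSn _)) /=.
have -> : t.+1 - size v = (t - size v).+1 by lia.
by congr reach; lia.
Qed.

Lemma reach_cross r u1 c rest j : {subset u1 ++ c :: rest <= rcons u1 c} ->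
  j < size rest -> reach r.+1 (u1 ++ c :: rest) (size u1 + 1 + j) -> reach r rest j.
Proof.
rewrite -cat_rcons => Hsub Hj.
have Hs : size (rcons u1 c) = size u1 + 1 by rewrite size_rcons addn1.
rewrite -Hs /= => [[H|[t Ht [H1 H2]]]].
  exfalso; move: H; rewrite take_cat ltnNge leq_addr /= mem_cat negb_or => /andP[H _].
  by move/negP: H; apply; apply: Hsub; apply: mem_nth; rewrite size_cat; lia.
have Htl : t < size (rcons u1 c).
  rewrite ltnNge; apply/negP => Hge; move/negP: H1; apply.
  rewrite take_cat ltnNge Hge /= mem_cat; apply/orP; left; apply: Hsub.
  by apply: mem_nth; rewrite size_cat; lia.
rewrite drop_cat_le // in H2.
apply: (@reach_suffix r (drop t.+1 (rcons u1 c))).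
by move: H2; congr reach; rewrite size_drop; lia.
Qed.

End Reach.


Section DFA.
Variables (X Q : finType) (x0 : X) (delta : Q -> X -> Q) (le : rel Q).
Hypothesis Hlin : linear_order le.
Hypothesis Hmono : forall p a, le p (delta p a).

Lemma run_loop q u i : i <= find (fun a => delta q a != q) u -> run delta q (take i u) = q.
Proof.
elim: i => [|i IH] Hi; first by rewrite take0.
have Hs : i < size u by apply: leq_trans Hi (find_size _ _).
rewrite /run (take_nth x0 Hs) foldl_rcons -/(run delta q (take i u)) IH ?(ltnW Hi) //.
by apply/eqP; move: (before_find x0 Hi) => /= /negbFE.
Qed.

Lemma move_struct q u j : j < size u ->
  delta (run delta q (take j u)) (nth x0 u j) != run delta q (take j u) ->
  exists t, [/\ t <= j, t < size u, delta q (nth x0 u t) != q,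
     nth x0 u t \notin take t u & run delta q (take t u) = q].
Proof.
move=> Hj Hne; set P := (fun a => delta q a != q).
have Htj : find P u <= j.
  rewrite leqNgt; apply/negP => Hlt.
  move: Hne; rewrite run_loop ?(ltnW Hlt) //.
  by move: (before_find x0 Hlt); rewrite /P => ->.
have Hts : find P u < size u by apply: leq_ltn_trans Htj Hj.
have Hmv : P (nth x0 u (find P u)) by apply: nth_find; rewrite has_find.
exists (find P u); split => //; last by apply: run_loop.
apply/negP => /(nthP x0) [i Hi Hei].
rewrite size_take Hts in Hi.
move: Hei; rewrite nth_take // => Hei.
move: (before_find x0 Hi); by rewrite /P Hei (negbTE Hmv).
Qed.

Lemma count_lt q q' : le q q' -> q' != q -> #|[set p | le q' p]| < #|[set p | le q p]|.
Proof.
case: Hlin => [Hrefl [Htr [Hanti _]]] Hqq' Hne.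
apply: proper_card; apply/properP; split.
  by apply/subsetP => p; rewrite !inE => Hp; apply: Htr Hqq' Hp.
exists q; first by rewrite inE Hrefl.
rewrite inE; apply/negP => Hq'q.
by move/eqP: Hne; apply; apply: Hanti; rewrite Hq'q Hqq'.
Qed.

Lemma dfa_reach r q u j : #|[set p | le q p]| <= r.+1 -> j < size u ->
  delta (run delta q (take j u)) (nth x0 u j) != run delta q (take j u) -> reach x0 r u j.
Proof.
elim: r q u j => [|r IH] q u j Hc Hj Hne;
  case: (move_struct Hj Hne) => t [Htj Hts Hmv Hnotin Hrun].
  have H1 := count_lt (Hmono q (nth x0 u t)) Hmv.
  have H2 : 0 < #|[set p | le (delta q (nth x0 u t)) p]|.
    apply/card_gt0P; exists (delta q (nth x0 u t)); rewrite inE; by case: Hlin.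
  lia.
rewrite leq_eqVlt in Htj; case/orP: Htj => [/eqP Htj|Htj].
  by left; rewrite -Htj.
right; exists t => //; split => //.
have H1 := count_lt (Hmono q (nth x0 u t)) Hmv.
have Ej : j = t.+1 + (j - t.+1) by lia.
apply: (IH (delta q (nth x0 u t))).
- lia.
- rewrite size_drop; lia.
move: Hne; rewrite {1 3}Ej takeD /run foldl_cat (take_nth x0 Hts) foldl_rcons.
rewrite -/(run delta q (take t u)) Hrun nth_drop -Ej.
done.
Qed.
End DFA.


Section Comb.
Variables (X : eqType) (x0 : X).

Lemma split_undup k (u : seq X) : k < size (undup u) ->
  exists u1 c rest, [/\ u = u1 ++ c :: rest, size (undup u1) <= k & k < size (undup (rcons u1 c))].
Proof.
elim/last_ind: u => [|u x IH] //= Hk.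
case: (leqP (size (undup u)) k) => Hu.
  by exists u, x, [::]; split => //; rewrite cats1.
case: (IH Hu) => u1 [c [rest [E H1 H2]]]; exists u1, c, (rcons rest x); split => //.
by rewrite E rcons_cat.
Qed.

Lemma cover k (u s : seq X) : size (undup u) <= k.+1 -> k < size (undup s) ->
  {subset s <= u} -> {subset u <= s}.
Proof.
move=> H1 H2 Hsub x Hx; apply/negPn/negP => Hn.
have : size (x :: undup s) <= size (undup u).
  apply: uniq_leq_size.
    by rewrite /= mem_undup Hn undup_uniq.
  move=> y; rewrite inE mem_undup; case/orP => [/eqP->|/Hsub]; by rewrite mem_undup.
rewrite /=; lia.
Qed.

Fixpoint Hb (R k : nat) : nat := if k is k'.+1 then R * (1 + Hb R k') else 0.

Lemma comb R k (u : seq X) : size (undup u) <= k ->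
  (forall j, j < size u -> reach x0 R u j) -> size u <= Hb R k.
Proof.
elim: k u => [|k IHk] u Hk Hall.
  case: u Hk Hall => // a u' Hk _.
  have Hin : a \in undup (a :: u') by rewrite mem_undup mem_head.
  by move: Hk; rewrite leqn0 => /eqP/size0nil E; rewrite E in Hin.
suff: forall r u, r <= R -> size (undup u) <= k.+1 ->
    (forall j, j < size u -> reach x0 r u j) -> size u <= r * (1 + Hb R k).
  by move=> Hs; apply: Hs.
clear -IHk.
elim=> [|r IHr] u Hr Hk Hall.
  by case: u Hk Hall => // a u' _ Hall; have := Hall 0 erefl.
case: (leqP (size (undup u)) k) => Hu.
  have := IHk u Hu (fun j Hj => reach_mono Hr (Hall j Hj)).
  rewrite mulSn; lia.
case: (split_undup Hu) => u1 [c [rest [E H1 H2]]]; subst u.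
have Hcov : {subset u1 ++ c :: rest <= rcons u1 c}.
  apply: (cover Hk H2) => y; rewrite mem_rcons inE mem_cat inE.
  by case/orP => [->|->]; rewrite ?orbT.
have Hs1 : size u1 <= Hb R k.
  apply: IHk H1 _ => j Hj; apply: (reach_mono Hr); apply: (reach_prefix Hj).
  by apply: Hall; rewrite size_cat; lia.
have Hs2 : size rest <= r * (1 + Hb R k).
  apply: IHr (ltnW Hr) _ _.
    apply: leq_trans Hk; apply: uniq_leq_size (undup_uniq rest) _.
    by move=> y; rewrite !mem_undup mem_cat inE => ->; rewrite !orbT.
  move=> j Hj; apply: (reach_cross Hcov Hj); apply: Hall.
  by rewrite size_cat /=; lia.
rewrite size_cat /= mulSn; lia.
Qed.

Lemma sumHb m k : \sum_(1 <= i < k.+1) m ^ i = Hb m k.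
Proof.
elim: k => [|k IH]; first by rewrite big_geq.
rewrite big_nat_recl // /= -IH expn1.
rewrite (eq_bigr (fun i => m * m ^ i)) => [|i _]; last by rewrite expnS.
by rewrite -big_distrr /= mulnDr muln1.
Qed.
End Comb.


Theorem mainTheorem4 (X : finType) (k n : nat) :
  #|X| = k -> 1 <= k -> 1 <= n ->
  (forall w : seq X, k * (n - 1) ^ k < size w ->
     exists j, cycling_position n w j) /\
  (forall w : seq X, \sum_(1 <= i < k.+1) (n - 1) ^ i < size w ->
     exists j, cycling_position n w j).
Proof.
move=> HX Hk Hn.
have Hmain : forall w : seq X, \sum_(1 <= i < k.+1) (n - 1) ^ i < size w ->
     exists j, cycling_position n w j.
  case=> [|x0 w'] Hw; first by rewrite ltn0 in Hw.
  set w := x0 :: w' in Hw *.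
  case: (classic (exists j, cycling_position n w j)) => // Hno; exfalso.
  have Hall : forall j, j < size w -> reach x0 (n - 1) w j.
    move=> j Hj; apply: NNPP => Hnr; apply: Hno; exists j; split => //.
    move=> Q delta HQ [le [Hlin Hmono]] q x1.
    rewrite (set_nth_default x0 x1 Hj).
    apply/eqP; apply/negPn/negP => Hne; apply: Hnr.
    apply: (dfa_reach Hlin Hmono (q:=q)) => //.
    have := max_card [set p | le q p]; lia.
  have Hu : size (undup w) <= k.
    rewrite -HX -(card_uniqP (undup_uniq w)); exact: max_card.
  have := comb Hu Hall; rewrite -sumHb => H.
  by move: (leq_trans Hw H); rewrite ltnn.
split => // w Hw; apply: Hmain; apply: leq_ltn_trans Hw.
have Hc : k * (n-1)^k = \sum_(1 <= i < k.+1) (n-1)^k.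
  by rewrite sum_nat_const_nat subSS subn0.
rewrite Hc.
rewrite big_nat_cond [X in _ <= X]big_nat_cond.
apply: leq_sum => i /andP[/andP[Hi1 Hi2] _].
case: (posnP (n - 1)) => Hm.
  by rewrite Hm exp0n.
by apply: leq_pexp2l.
Qed.
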